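(* Let $k\ge1$. If $S\subseteq\mathbb R^n$ is the set of vertices of a $(k+1)$-level polytope, then $\mathcal I(S)$ is $\mathrm{TH}_k$-exact, i.e. $\mathrm{TH}_k(\mathcal I(S))=\operatorname{conv}(S)$.
   Context: For $S\subseteq\mathbb R^n$, $\mathcal I(S)$ is the ideal of all polynomials vanishing on $S$, and $\mathcal V_{\mathbb R}(I)$ is the real zero set of an ideal $I$. $\mathbb{R}[\mathbf x]_k$ denotes the polynomials of degree at most $k$. A polynomial $h$ is $k$-sos modulo $I$ if there are $g_1,\dots,g_r\in\mathbb{R}[\mathbf x]_k$ with $h-\sum_i g_i^2\in I$. The $k$-th theta body is $\mathrm{TH}_k(I)=\{p\in\mathbb R^n: l(p)\ge 0$ for every $l\in\mathbb{R}[\mathbf x]_1$ that is $k$-sos modulo $I\}$. $I$ is $\mathrm{TH}_k$-exact if $\mathrm{TH}_k(I)=\operatorname{cl}(\operatorname{conv}(\mathcal V_{\mathbb R}(I)))$. A polytope $P$ (facets taken relative to its affine hull) is $m$-level if for every facet $F$ of $P$ and the supporting hyperplane $H$ of $F$ there are $m-1$ hyperplanes $H_1,\dots,H_{m-1}$ parallel to $H$ such that all vertices of $P$ lie in $H\cup H_1\cup\dots\cup H_{m-1}$. *)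

(* Defs.v *)
From HB Require Import structures.
From mathcomp Require Import all_boot all_order all_algebra.
Set Implicit Arguments. Unset Strict Implicit. Unset Printing Implicit Defensive.
Import Order.TTheory GRing.Theory Num.Theory.
Local Open Scope ring_scope.

Section Defs.
Variables (R : rcfType) (n : nat).

Definition monom (e : {ffun 'I_n -> nat}) (x : 'rV[R]_n) : R :=
  \prod_(j < n) x 0 j ^+ e j.
Definition mdeg (e : {ffun 'I_n -> nat}) : nat := (\sum_(j < n) e j)%N.

Definition polyk (k : nat) (f : 'rV[R]_n -> R) : Prop :=
  exists ms : seq (R * {ffun 'I_n -> nat}),
    all (fun m => mdeg m.2 <= k)%N ms /\
    forall x, f x = \sum_(m <- ms) m.1 * monom m.2 x.

Definition lin (a : 'rV[R]_n) (c : R) (x : 'rV[R]_n) : R :=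
  \sum_(j < n) a 0 j * x 0 j + c.

Definition inI (S : seq 'rV[R]_n) (h : 'rV[R]_n -> R) : Prop :=
  forall s, s \in S -> h s = 0.

Definition ksos_mod (k : nat) (S : seq 'rV[R]_n) (h : 'rV[R]_n -> R) : Prop :=
  exists (r : nat) (g : 'I_r -> 'rV[R]_n -> R),
    (forall i, polyk k (g i)) /\
    inI S (fun x => h x - \sum_(i < r) g i x ^+ 2).

Definition TH (k : nat) (S : seq 'rV[R]_n) (p : 'rV[R]_n) : Prop :=
  forall a c, ksos_mod k S (lin a c) -> 0 <= lin a c p.

Definition conv (S : seq 'rV[R]_n) (p : 'rV[R]_n) : Prop :=
  exists w : 'I_(size S) -> R,
    (forall i, 0 <= w i) /\ \sum_(i < size S) w i = 1 /\
    p = \sum_(i < size S) w i *: S`_i.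

Definition vertex_set (S : seq 'rV[R]_n) : Prop :=
  forall s, s \in S -> ~ conv [seq t <- S | t != s] s.

Definition affdim (T : seq 'rV[R]_n) : nat :=
  \rank (\matrix_(i < size T, j < n) (T`_i - T`_0) 0 j).

(* the valid inequality lin a c >= 0 on conv(S) defines a facet
   (face of dimension dim conv(S) - 1, relative to the affine hull) *)
Definition defines_facet (S : seq 'rV[R]_n) (a : 'rV[R]_n) (c : R) : Prop :=
  (forall s, s \in S -> 0 <= lin a c s) /\
  let F := [seq s <- S | lin a c s == 0] in
  F != [::] /\ (affdim F).+1 = affdim S.

(* conv(S) is m-level: for each facet, the vertices lie on at most m
   hyperplanes (within the affine hull) parallel to the facet hyperplane *)
Definition mlevel (m : nat) (S : seq 'rV[R]_n) : Prop :=
  forall a c, defines_facet S a c ->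
    (size (undup [seq lin a c s | s <- S]) <= m)%N.

End Defs.

(* Main.v *)
Require Import Defs.
From HB Require Import structures.
From mathcomp Require Import all_boot all_order all_algebra.
From Stdlib Require Import Classical.
Set Implicit Arguments. Unset Strict Implicit. Unset Printing Implicit Defensive.
Import Order.TTheory GRing.Theory Num.Theory.
Local Open Scope ring_scope.



Section PolyK.
Variables (R : rcfType) (n : nat).
Implicit Types (f g : 'rV[R]_n -> R).

Lemma polyk_mono k k' f : (k <= k')%N -> polyk k f -> polyk k' f.
Proof.
move=> kk [ms [Hall Hf]]; exists ms; split=> //.
apply/allP=> m /(allP Hall) /= H; exact: leq_trans H kk.
Qed.

Lemma polyk_ext k f g : (forall x, f x = g x) -> polyk k f -> polyk k g.
Proof. by move=> E [ms [H1 H2]]; exists ms; split=> // x; rewrite -E. Qed.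

Lemma polyk_const k (c : R) : polyk k (fun _ : 'rV[R]_n => c).
Proof.
exists [:: (c, [ffun _ => 0%N])]; split.
  by rewrite /= /mdeg big1 // => j _; rewrite ffunE.
move=> x; rewrite big_cons big_nil addr0 /= /monom big1 ?mulr1 // => j _.
by rewrite ffunE expr0.
Qed.

Lemma polyk_add k f g : polyk k f -> polyk k g -> polyk k (fun x => f x + g x).
Proof.
move=> [m1 [H1 E1]] [m2 [H2 E2]]; exists (m1 ++ m2); split.
  by rewrite all_cat H1 H2.
by move=> x; rewrite big_cat /= E1 E2.
Qed.

Lemma polyk_scale k (c : R) f : polyk k f -> polyk k (fun x => c * f x).
Proof.
move=> [m1 [H1 E1]]; exists [seq (c * m.1, m.2) | m <- m1]; split.
  by rewrite all_map.
by move=> x; rewrite big_map E1 mulr_sumr; apply: eq_bigr => m _ /=; rewrite mulrA.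
Qed.

Definition eadd (e1 e2 : {ffun 'I_n -> nat}) : {ffun 'I_n -> nat} :=
  [ffun j => (e1 j + e2 j)%N].

Lemma monom_add e1 e2 (x : 'rV[R]_n) : monom (eadd e1 e2) x = monom e1 x * monom e2 x.
Proof.
by rewrite /monom -big_split /=; apply: eq_bigr => j _; rewrite ffunE exprD.
Qed.

Lemma mdeg_add e1 e2 : mdeg (eadd e1 e2) = (mdeg e1 + mdeg e2)%N.
Proof.
by rewrite /mdeg -big_split /=; apply: eq_bigr => j _; rewrite ffunE.
Qed.

Lemma polyk_mul k1 k2 f g : polyk k1 f -> polyk k2 g ->
  polyk (k1 + k2) (fun x => f x * g x).
Proof.
move=> [m1 [H1 E1]] [m2 [H2 E2]].
exists [seq (u.1.1 * u.2.1, eadd u.1.2 u.2.2) | u <- [seq (i1, i2) | i1 <- m1, i2 <- m2]].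
split.
  rewrite all_map; apply/allP=> u /allpairsP [[u1 u2] [Hu1 Hu2 ->]] /=.
  rewrite mdeg_add leq_add //; [exact: (allP H1) | exact: (allP H2)].
move=> x; rewrite big_map big_allpairs E1 mulr_suml; apply: eq_bigr => u1 _.
rewrite E2 mulr_sumr; apply: eq_bigr => u2 _ /=.
rewrite monom_add; rewrite -!mulrA; congr (_ * _).
by rewrite mulrCA.
Qed.

Lemma polyk_sum k m (F : 'I_m -> 'rV[R]_n -> R) :
  (forall i, polyk k (F i)) -> polyk k (fun x => \sum_(i < m) F i x).
Proof.
elim: m F => [|m IH] F HF.
  apply: (@polyk_ext _ (fun _ => 0)); first by move=> x; rewrite big_ord0.
  exact: polyk_const.
apply: (@polyk_ext _ (fun x => F ord0 x + \sum_(i < m) F (lift ord0 i) x)).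
  by move=> x; rewrite big_ord_recl.
apply: polyk_add; first exact: HF.
exact: (IH (fun i => F (lift ord0 i))).
Qed.

Definition edelta (j : 'I_n) : {ffun 'I_n -> nat} := [ffun i => (i == j) : nat].

Lemma polyk_coord (j : 'I_n) : polyk 1 (fun x : 'rV[R]_n => x 0 j).
Proof.
exists [:: (1, edelta j)]; split.
  rewrite /= /mdeg andbT (bigD1 j) //= ffunE eqxx big1 // => i /negbTE.
  by rewrite ffunE => ->.
move=> x; rewrite big_cons big_nil addr0 /= mul1r /monom (bigD1 j) //=.
rewrite ffunE eqxx expr1 big1 ?mulr1 // => i /negbTE Hi.
by rewrite ffunE Hi expr0.
Qed.

Lemma polyk_lin (a : 'rV[R]_n) c : polyk 1 (lin a c).
Proof.
apply: polyk_add; last exact: polyk_const.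
apply: polyk_sum => j; apply: polyk_scale; exact: polyk_coord.
Qed.

Lemma polyk_exp k f i : polyk k f -> polyk (k * i) (fun x => f x ^+ i).
Proof.
move=> Hf; elim: i => [|i IH].
  rewrite muln0; apply: (@polyk_ext _ (fun _ => 1)); first by move=> x; rewrite expr0.
  exact: polyk_const.
rewrite mulnS; apply: (@polyk_ext _ (fun x => f x * f x ^+ i)).
  by move=> x; rewrite exprS.
exact: polyk_mul.
Qed.

Lemma polyk_horner k (q : {poly R}) f : (size q <= k.+1)%N -> polyk 1 f ->
  polyk k (fun x => q.[f x]).
Proof.
move=> Hs Hf.
apply: (@polyk_ext _ (fun x => \sum_(i < size q) q`_i * f x ^+ i)).
  by move=> x; rewrite horner_coef.
apply: polyk_sum => i; apply: polyk_scale.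
apply: (@polyk_mono (1 * i)); last exact: polyk_exp.
rewrite mul1n -ltnS; exact: leq_trans (ltn_ord i) Hs.
Qed.

End PolyK.



Section Interp.
Variable (R : rcfType).

Lemma interp (V : seq R) (h : R -> R) : uniq V ->
  exists q : {poly R}, (size q <= size V)%N /\ forall v, v \in V -> q.[v] = h v.
Proof.
elim: V => [|v V IH] /=.
  by move=> _; exists 0; rewrite size_poly0.
move=> /andP [vV uV]; have [q [Hs Hq]] := IH uV.
pose P := \prod_(w <- V) ('X - w%:P).
have Pv : P.[v] != 0.
  rewrite horner_prod prodf_seq_neq0; apply/allP => w wV /=; rewrite hornerXsubC subr_eq0.
  by apply/eqP => E; move: vV; rewrite E wV.
exists (q + ((h v - q.[v]) / P.[v]) *: P); split.
  apply: leq_trans (size_polyD _ _) _; rewrite geq_max; apply/andP; split.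
    exact: leq_trans Hs (leqnSn _).
  apply: leq_trans (size_scale_leq _ _) _; by rewrite size_prod_XsubC.
move=> w; rewrite in_cons => /orP [/eqP ->|wV].
  by rewrite hornerD hornerZ divfK // addrC subrK.
rewrite hornerD hornerZ.
have -> : P.[w] = 0.
  apply/eqP; rewrite horner_prod prodf_seq_eq0; apply/hasP; exists w => //.
  by rewrite /= hornerXsubC subrr.
by rewrite mulr0 addr0 Hq.
Qed.

Variable n : nat.

Lemma ksos_few k (S : seq 'rV[R]_n) a c :
  (forall s, s \in S -> 0 <= lin a c s) ->
  (size (undup [seq lin a c s | s <- S]) <= k.+1)%N -> ksos_mod k S (lin a c).
Proof.
move=> Hpos Hsz.
have [q [Hs Hq]] := interp (@Num.sqrt R) (undup_uniq [seq lin a c s | s <- S]).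
exists 1%N, (fun _ x => q.[lin a c x]); split.
  move=> _; apply: polyk_horner; [exact: leq_trans Hs Hsz | exact: polyk_lin].
move=> s sS; rewrite big_ord1 Hq ?sqr_sqrtr ?subrr ?Hpos //.
by rewrite mem_undup; apply: map_f.
Qed.

Lemma ksos_zero k (S : seq 'rV[R]_n) a c :
  (forall s, s \in S -> lin a c s = 0) -> ksos_mod k S (lin a c).
Proof.
move=> H; exists 0%N, (fun _ _ => 0); split; first by move=> _; exact: polyk_const.
by move=> s sS; rewrite big_ord0 subr0 H.
Qed.

End Interp.



Section Farkas.
Variable (R : rcfType) (N : nat).

Definition pr (v : 'rV[R]_N) (y : 'cV[R]_N) : R := (v *m y) 0 0.

Lemma prBr v (al be : R) y z : pr v (al *: y - be *: z) = al * pr v y - be * pr v z.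
Proof. by rewrite /pr mulmxBr -!scalemxAr !mxE. Qed.

Lemma prBl (al be : R) u v y : pr (al *: u - be *: v) y = al * pr u y - be * pr v y.
Proof. by rewrite /pr mulmxBl -!scalemxAl !mxE. Qed.

Lemma prSl m (mu : 'I_m -> R) (F : 'I_m -> 'rV[R]_N) y :
  pr (\sum_i mu i *: F i) y = \sum_i mu i * pr (F i) y.
Proof.
rewrite /pr mulmx_suml summxE; apply: eq_bigr => i _.
by rewrite -scalemxAl mxE.
Qed.

Definition ext m (t : R) (mu : 'I_m -> R) (i : 'I_m.+1) : R :=
  if unlift ord0 i is Some j then mu j else t.

Lemma ext0 m t (mu : 'I_m -> R) : ext t mu ord0 = t.
Proof. by rewrite /ext unlift_none. Qed.

Lemma extS m t (mu : 'I_m -> R) i : ext t mu (lift ord0 i) = mu i.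
Proof. by rewrite /ext liftK. Qed.

Lemma farkas m (F : 'I_m -> 'rV[R]_N) (b : 'rV[R]_N) :
  (exists mu : 'I_m -> R, (forall i, 0 <= mu i) /\ b = \sum_i mu i *: F i) \/
  (exists y, (forall i, 0 <= pr (F i) y) /\ pr b y < 0).
Proof.
elim: m F b => [|m IH] F b.
  have [->|bn0] := eqVneq b 0.
    by left; exists (fun _ => 0); split=> //; rewrite big_ord0.
  right; exists (- b^T); split; first by case.
  rewrite /pr mulmxN mxE oppr_lt0 mxE.
  have Hge : forall j : 'I_N, true -> 0 <= b 0 j * b^T j 0.
    by move=> j _; rewrite mxE -expr2 sqr_ge0.
  rewrite lt_def sumr_ge0 // andbT; apply/eqP => /(psumr_eq0P Hge) H.
  move/eqP: bn0; apply; apply/matrixP => i j; rewrite (ord1 i) mxE.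
  by have /eqP := H j isT; rewrite mxE mulf_eq0 orbb => /eqP.
pose a := F ord0; pose G i := F (lift ord0 i).
have [[mu [Hmu Eb]]|[y [Hy Hby]]] := IH G b.
  left; exists (ext 0 mu); split.
    by move=> i; rewrite /ext; case: (unlift _ _).
  by rewrite Eb big_ord_recl ext0 scale0r add0r; apply: eq_bigr => i _; rewrite extS.
have [Hay|Hay] := leP 0 (pr a y).
  right; exists y; split=> // i; case: (unliftP ord0 i) => [j ->|->] //; exact: Hy.
pose G' i := pr (G i) y *: a - pr a y *: G i.
pose b' := pr b y *: a - pr a y *: b.
have ya0 : pr a y != 0 by rewrite lt_eqF.
have [[mu [Hmu Eb]]|[z [Hz Hbz]]] := IH G' b'.
  pose s := \sum_i mu i * pr (G i) y.
  pose t := (pr b y - s) / pr a y.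
  left; exists (ext t mu); split.
    move=> i; case: (unliftP ord0 i) => [j ->|->]; rewrite ?extS ?ext0 //.
    rewrite /t mulr_le0 // ?invr_le0 ?(ltW Hay) //.
    rewrite subr_le0; apply: le_trans (ltW Hby) _.
    by apply: sumr_ge0 => k _; rewrite mulr_ge0.
  rewrite big_ord_recl ext0.
  under eq_bigr do rewrite extS.
  have E1 : \sum_i mu i *: G' i = s *: a - pr a y *: \sum_i mu i *: G i.
    rewrite /G' /s scaler_suml scaler_sumr -sumrB; apply: eq_bigr => i _.
    by rewrite scalerBr !scalerA mulrC [_ * mu i]mulrC.
  move: Eb; rewrite E1 /b' => Eb.
  have Eb2 : pr a y *: b = pr b y *: a - (pr b y *: a - pr a y *: b).
    by rewrite opprB addrC subrK.
  rewrite Eb opprB addrCA addrA in Eb2.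
  set X := \sum_i _ *: _.
  suff H : pr a y *: b = pr a y *: (t *: a + X).
    by move/(congr1 (fun v => (pr a y)^-1 *: v)): H; rewrite !scalerA mulVf // !scale1r.
  rewrite scalerDr scalerA /t mulrCA divff // mulr1 scalerBl.
  by rewrite Eb2 -addrA addrC.
right; exists (pr a z *: y - pr a y *: z); split.
  move=> i; case: (unliftP ord0 i) => [j ->|->].
    by rewrite prBr; move: (Hz j); rewrite /G' prBl [pr (G j) y * _]mulrC.
  by rewrite prBr mulrC subrr.
by rewrite prBr; move: Hbz; rewrite /b' prBl [pr b y * _]mulrC.
Qed.

End Farkas.



Section Geo.
Variable (R : rcfType) (n : nat).

Definition lft (x : 'rV[R]_n) : 'rV[R]_(1 + n) := row_mx (const_mx 1) x.
Definition L (phi : 'cV[R]_(1 + n)) (x : 'rV[R]_n) : R := pr (lft x) phi.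
Definition la (phi : 'cV[R]_(1 + n)) : 'rV[R]_n := (dsubmx phi)^T.
Definition lc (phi : 'cV[R]_(1 + n)) : R := usubmx phi 0 0.

Lemma L_lin phi x : L phi x = lin (la phi) (lc phi) x.
Proof.
rewrite /L /pr /lft -[phi]vsubmxK mul_row_col mxE addrC /lin /lc /la col_mxKu col_mxKd.
congr (_ + _).
  by rewrite mxE; apply: eq_bigr => j _; rewrite !mxE mulrC.
by rewrite mxE big_ord1 mxE mul1r.
Qed.

Definition LM (T : seq 'rV[R]_n) : 'M[R]_(size T, 1 + n) := \matrix_(i < size T) lft T`_i.

Lemma LM_row T i : row i (LM T) = lft T`_i.
Proof. by rewrite rowK. Qed.

Lemma lft_sub T x : x \in T -> (lft x <= LM T)%MS.
Proof.
move=> xT; have Hi : (index x T < size T)%N by rewrite index_mem.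
by apply: (eq_row_sub (Ordinal Hi)); rewrite LM_row /= nth_index.
Qed.

Lemma sub_kill m1 m2 (u : 'M[R]_(m1, 1 + n)) (A : 'M[R]_(m2, 1 + n)) phi :
  (u <= A)%MS -> A *m (phi : 'cV[R]_(1 + n)) = 0 -> u *m phi = 0.
Proof. by move=> /submxP [D ->] H; rewrite -mulmxA H mulmx0. Qed.

Lemma L_of phi x : lft x *m phi = 0 -> L phi x = 0.
Proof. by rewrite /L /pr => ->; rewrite mxE. Qed.

Lemma LM_kill T phi : (forall x, x \in T -> L phi x = 0) -> LM T *m phi = 0.
Proof.
move=> H; apply/row_matrixP => i; rewrite row_mul LM_row row0.
apply/matrixP => a b; rewrite (ord1 a) (ord1 b) [RHS]mxE.
by have := H T`_i (mem_nth 0 (ltn_ord i)); rewrite /L /pr.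
Qed.

Lemma rank_LM T : T != [::] -> \rank (LM T) = (affdim T).+1.
Proof.
move=> Tn0.
have T0 : (0 < size T)%N by case: T Tn0.
pose D := \matrix_(i < size T, j < n) (T`_i - T`_0) 0 j.
pose u := lft T`_0.
pose B : 'M[R]_(size T, 1 + n) := row_mx 0 D.
have rowB i : row i B = lft T`_i - u.
  rewrite /B /u /lft row_row_mx row0 opp_row_mx add_row_mx subrr.
  congr row_mx; apply/matrixP => a j; rewrite (ord1 a) !mxE //.
have Hsub : (LM T == u + B)%MS.
  apply/andP; split.
    apply/row_subP => i; rewrite LM_row -[lft _](subrK u) -(rowB i) addrC.
    exact: addmx_sub_adds (submx_refl _) (row_sub _ _).
  rewrite addsmx_sub; apply/andP; split; first exact/lft_sub/mem_nth.
  apply/row_subP => i; rewrite rowB; apply: addmx_sub.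
    exact/lft_sub/mem_nth.
  by rewrite -scaleN1r scalemx_sub //; exact/lft_sub/mem_nth.
rewrite (eqmx_rank Hsub).
have Hcap : (u :&: B <= (0 : 'M_(1 + n)))%MS.
  apply/row_subP => i; set r := row i _.
  have ru : (r <= u)%MS by apply: submx_trans (row_sub _ _) (capmxSl _ _).
  have rB : (r <= B)%MS by apply: submx_trans (row_sub _ _) (capmxSr _ _).
  move/sub_rVP: ru => [al Eal]; move/submxP: rB => [Y EY].
  have : (al *: u) 0 (lshift n 0) = 0 by rewrite -Eal EY /B mul_mx_row row_mxEl mulmx0 mxE.
  rewrite mxE /u /lft row_mxEl mxE mulr1 => al0.
  by rewrite Eal al0 scale0r sub0mx.
case: (mxrank_adds_leqif u B) => _ /esym; rewrite Hcap => /esym/eqP ->.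
rewrite rank_rV /B rank_row_0mx.
have -> : u != 0.
  apply/eqP => /matrixP /(_ 0 (lshift n 0)); rewrite /u /lft row_mxEl !mxE.
  by move/eqP; rewrite oner_eq0.
by [].
Qed.


Definition Z (S : seq 'rV[R]_n) phi := [seq s <- S | L phi s == 0].

Lemma Z_kill S phi : LM (Z S phi) *m phi = 0.
Proof. by apply: LM_kill => x; rewrite mem_filter => /andP [/eqP]. Qed.

Lemma Z_sub S phi : (LM (Z S phi) <= LM S)%MS.
Proof.
apply/row_subP => i; rewrite LM_row; apply: lft_sub.
by have := mem_nth 0 (ltn_ord i); rewrite mem_filter => /andP [].
Qed.

Lemma facet_of S p phi : (forall s, s \in S -> 0 <= L phi s) -> L phi p < 0 ->
  (forall s, s \in S -> (lft s <= lft p + LM (Z S phi))%MS) ->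
  (exists2 s, s \in S & L phi s != 0) -> defines_facet S (la phi) (lc phi).
Proof.
move=> Hv Hp Hs [s0 S0 Ls0].
have EZ : [seq s <- S | lin (la phi) (lc phi) s == 0] = Z S phi.
  by apply: eq_filter => x; rewrite L_lin.
have kill := Z_kill S phi.
rewrite /defines_facet EZ; split; first by move=> s /Hv; rewrite L_lin.
have Zn0 : Z S phi != [::].
  apply/eqP => EZ0; have := Hs s0 S0; case/sub_addsmxP => [[x y] /= E].
  have E1 : lft s0 *m phi = x *m (lft p *m phi).
    by rewrite E mulmxDl -!mulmxA kill mulmx0 addr0.
  have E2 : (lft s0) 0 (lshift n 0) = x 0 0.
    rewrite E mxE [X in _ + X]mxE big1 ?addr0.
      by rewrite mxE big_ord1 /lft row_mxEl mxE mulr1.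
    by case=> k Hk; exfalso; move: Hk; rewrite EZ0.
  move: E2; rewrite /lft row_mxEl mxE => x1.
  have : L phi s0 = L phi p.
    by rewrite /L /pr E1 mxE big_ord1 -x1 mul1r.
  by move=> E3; have := Hv s0 S0; rewrite E3 leNgt Hp.
split=> //.
have Sn0 : S != [::] by apply/eqP => E0; move: S0; rewrite E0.
apply/eqP; rewrite -eqSS -rank_LM // -rank_LM //; apply/eqP/anti_leq/andP; split.
  have nsub : ~~ (LM (Z S phi) + lft s0 <= LM (Z S phi))%MS.
    apply/negP; rewrite addsmx_sub => /andP [_ H].
    by move/eqP: Ls0; apply; apply: L_of; exact: sub_kill H kill.
  have lt1 : (LM (Z S phi) < LM (Z S phi) + lft s0)%MS by rewrite ltmxE addsmxSl.
  have sub2 : (LM (Z S phi) + lft s0 <= LM S)%MS by rewrite addsmx_sub Z_sub lft_sub.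
  exact: leq_trans (rank_ltmx lt1) (mxrankS sub2).
have sub3 : (LM S <= lft p + LM (Z S phi))%MS.
  by apply/row_subP => i; rewrite LM_row; apply/Hs/mem_nth.
apply: leq_trans (mxrankS sub3) _.
apply: leq_trans (mxrank_adds_leqif _ _).1 _.
by rewrite -[X in (_ <= X)%N]add1n leq_add2r rank_leq_row.
Qed.

End Geo.



Section Rot.
Variable (R : rcfType) (n : nat).

Lemma exists_min (T : eqType) (s : seq T) (f : T -> R) x0 : x0 \in s ->
  exists2 x, x \in s & forall y, y \in s -> f x <= f y.
Proof.
elim: s x0 => [|a s IH] x0 //= _.
case: s IH => [|b s] IH.
  by exists a; rewrite ?mem_seq1 // => y; rewrite mem_seq1 => /eqP ->.
have [x xs Hx] := IH b (mem_head _ _).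
have [le|lt] := leP (f a) (f x).
  exists a; first exact: mem_head.
  move=> y; rewrite in_cons => /orP [/eqP ->//|/Hx]; exact: le_trans le.
exists x; first by rewrite in_cons xs orbT.
move=> y; rewrite in_cons => /orP [/eqP ->|/Hx //]; exact: ltW.
Qed.

Lemma prD N (v : 'rV[R]_N) y t z : pr v (y + t *: z) = pr v y + t * pr v z.
Proof. by rewrite /pr mulmxDr -scalemxAr !mxE. Qed.

Lemma colM m1 m2 m3 (A : 'M[R]_(m1, m2)) (B : 'M[R]_(m2, m3)) j :
  A *m col j B = col j (A *m B).
Proof. by rewrite !colE mulmxA. Qed.

Lemma step (S : seq 'rV[R]_n) p phi s :
  (forall x, x \in S -> 0 <= L phi x) -> L phi p < 0 -> s \in S ->
  ~~ (lft s <= lft p + LM (Z S phi))%MS ->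
  exists psi, (forall x, x \in S -> 0 <= L psi x) /\ L psi p < 0 /\
   (\rank (lft p + LM (Z S phi)) < \rank (lft p + LM (Z S psi)))%N.
Proof.
move=> Hv Hp sS; set M := (lft p + LM (Z S phi))%MS; rewrite submxE => nz.
have [j Hj] : exists j, (lft s *m cokermx M) 0 j != 0.
  case: (pickP (fun j => (lft s *m cokermx M) 0 j != 0)) => [j Hj|H]; first by exists j.
  move: nz; case/negP; apply/eqP/matrixP => a b; rewrite (ord1 a) [RHS]mxE.
  by apply/eqP; move: (H b) => /= /negbFE.
pose m0 := col j (cokermx M).
have Mm0 : M *m m0 = 0 by rewrite /m0 colM mulmx_coker; apply/matrixP => a b; rewrite !mxE.
have Hm0 : pr (lft s) m0 = (lft s *m cokermx M) 0 j by rewrite /pr colM mxE.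
pose m := if pr (lft s) m0 < 0 then m0 else - m0.
have Mm : M *m m = 0 by rewrite /m; case: ifP => _; rewrite ?mulmxN Mm0 ?oppr0.
have Lms : L m s < 0.
  rewrite /L /m; case: ifP => // /negbT; rewrite -leNgt => H.
  have -> : pr (lft s) (- m0) = - pr (lft s) m0 by rewrite /pr mulmxN mxE.
  by rewrite oppr_lt0 lt_def H Hm0 Hj.
have killM x : (lft x <= M)%MS -> L m x = 0.
  by move=> H; apply: L_of; exact: sub_kill H Mm.
pose C := [seq x <- S | L m x < 0].
have sC : s \in C by rewrite mem_filter Lms.
pose f x := L phi x / - L m x.
have [s1 C1 Hmin] := exists_min f sC.
move: C1; rewrite mem_filter => /andP [Lms1 S1].
pose t := f s1.
have t0 : 0 <= t by rewrite /t /f divr_ge0 ?Hv // oppr_ge0 ltW.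
pose psi := phi + t *: m.
have Lpsi x : L psi x = L phi x + t * L m x by rewrite /L prD.
exists psi; split.
  move=> x xS; rewrite Lpsi; have [neg|nneg] := ltP (L m x) 0.
    have : t <= f x by apply: Hmin; rewrite mem_filter neg xS.
    rewrite /f ler_pdivlMr ?oppr_gt0 // mulrN => H.
    by rewrite -[t * _]opprK subr_ge0.
  by rewrite addr_ge0 ?Hv // mulr_ge0.
split; first by rewrite Lpsi killM ?addsmxSl // mulr0 addr0.
set M' := (lft p + LM (Z S psi))%MS.
have Zsub x : x \in Z S phi -> x \in Z S psi.
  rewrite !mem_filter => /andP [/eqP H xS]; rewrite xS andbT Lpsi H add0r.
  rewrite killM ?mulr0 //; apply: submx_trans (addsmxSr _ _).
  by apply: lft_sub; rewrite mem_filter H eqxx.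
have MM' : (M <= M')%MS.
  rewrite addsmx_sub addsmxSl /=; apply/row_subP => i; rewrite LM_row.
  apply: submx_trans (addsmxSr _ _); apply: lft_sub; apply: Zsub; exact: mem_nth.
have s1Z : s1 \in Z S psi.
  rewrite mem_filter S1 andbT Lpsi /t /f invrN mulrN mulNr divfK ?subrr //.
  by rewrite lt_eqF.
have nMM : ~~ (M' <= M)%MS.
  apply/negP => H; have : (lft s1 <= M)%MS.
    by apply: submx_trans H; apply: submx_trans (addsmxSr _ _); exact: lft_sub.
  by move/killM => E; move: Lms1; rewrite E ltxx.
by apply: rank_ltmx; rewrite ltmxE MM'.
Qed.

End Rot.



Lemma rotate (R : rcfType) (n : nat) (S : seq 'rV[R]_n) p d : forall phi,
  (forall x, x \in S -> 0 <= L phi x) -> L phi p < 0 ->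
  (1 + n - \rank (lft p + LM (Z S phi)) <= d)%N ->
  exists psi, (forall x, x \in S -> 0 <= L psi x) /\ L psi p < 0 /\
   (forall s, s \in S -> (lft s <= lft p + LM (Z S psi))%MS).
Proof.
elim: d => [|d IH] phi Hv Hp Hd;
  (case E: (all (fun s => lft s <= lft p + LM (Z S phi))%MS S);
    [by exists phi; split=> //; split=> //; apply/allP; rewrite E|]);
  have [s sS ns] := allPn (negbT E);
  have [psi [Hv' [Hp' Hr]]] := step Hv Hp sS ns;
  have hb := rank_leq_col (lft p + LM (Z S psi))%MS.
  move: Hd; rewrite leqn0 subn_eq0 => Ha.
  by move: (leq_trans Hr hb); rewrite ltnNge Ha.
apply: (IH psi) => //.
rewrite -ltnS; apply: leq_trans Hd.
apply: ltn_sub2l => //; exact: leq_trans Hr hb.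
Qed.

Lemma lin_conv (R : rcfType) (n : nat) (S : seq 'rV[R]_n) (w : 'I_(size S) -> R) a c :
  \sum_i w i = 1 ->
  lin a c (\sum_i w i *: S`_i) = \sum_i w i * lin a c S`_i.
Proof.
move=> w1; rewrite /lin.
under [RHS]eq_bigr do rewrite mulrDr.
rewrite big_split /= -mulr_suml w1 mul1r; congr (_ + _).
under eq_bigr do rewrite summxE mulr_sumr.
rewrite exchange_big /=; apply: eq_bigr => i _; rewrite mulr_sumr.
by apply: eq_bigr => j _; rewrite !mxE mulrCA.
Qed.

Theorem mainTheorem16 (R : rcfType) (n k : nat) (S : seq 'rV[R]_n) :
  (1 <= k)%N -> vertex_set S -> mlevel k.+1 S ->
  forall p : 'rV[R]_n, TH k S p <-> conv S p.
Proof.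
move=> k1 vS ml p; split; last first.
  move=> [w [w0 [w1 Ep]]] a c [r [g [Hg HI]]].
  rewrite Ep lin_conv //; apply: sumr_ge0 => i _; apply: mulr_ge0 => //.
  have := HI S`_i (mem_nth 0 (ltn_ord i)); move/eqP; rewrite subr_eq0 => /eqP ->.
  by apply: sumr_ge0 => j _; exact: sqr_ge0.
move=> HTH; case: (classic (conv S p)) => // ncv; exfalso.
case: (farkas (fun i : 'I_(size S) => lft S`_i) (lft p)) => [[mu [Hmu E]]|[y [Hy Hby]]].
  apply: ncv; exists mu; split=> //.
  have El := congr1 lsubmx E; have Er := congr1 rsubmx E.
  rewrite /lft row_mxKl raddf_sum in El; rewrite /lft row_mxKr raddf_sum in Er.
  split.
    move/matrixP: El => /(_ 0 0); rewrite mxE summxE => ->.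
    apply: eq_bigr => i _.
    change (mu i = (lsubmx (mu i *: row_mx (const_mx 1) S`_i : 'M[R]_(1, 1 + n))) 0 0).
    by rewrite scale_row_mx row_mxKl !mxE mulr1.
  rewrite Er; apply: eq_bigr => i _.
  change (rsubmx (mu i *: row_mx (const_mx 1) S`_i : 'M[R]_(1, 1 + n)) = mu i *: S`_i).
  by rewrite scale_row_mx row_mxKr.
have Hv : forall x, x \in S -> 0 <= L y x.
  move=> x xS; have Hi : (index x S < size S)%N by rewrite index_mem.
  by have := Hy (Ordinal Hi); rewrite /= nth_index.
have [psi [Hv' [Hp' Ht]]] := rotate (d := (1 + n)%N) Hv Hby (leq_subr _ _).
have Hlin := L_lin psi.
suff Hks : ksos_mod k S (lin (la psi) (lc psi)).
  by have := HTH _ _ Hks; rewrite -Hlin leNgt Hp'.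
case: (boolP (all (fun s => L psi s == 0) S)) => [/allP allz|/allPn [s0 S0 nz]].
  by apply: ksos_zero => s /allz /eqP; rewrite Hlin.
have Hf := facet_of Hv' Hp' Ht (ex_intro2 _ _ s0 S0 nz).
apply: ksos_few; first by move=> s /Hv'; rewrite Hlin.
exact: ml Hf.
Qed.
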